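(* Assume the ABC Conjecture over $\mathbb{Z}$. There is an absolute constant $c>0$ such that the following holds. Let $N>0$ be an integer, let $E_N$ be the elliptic curve $y^2=x^3-Nx$ over $\mathbb{Q}$, and let $P\in E_N(\mathbb{Q})$ be a non-torsion point. If $L(2P)\le 1$, then $$\log|x(P)|\le c\log N\quad\text{and}\quad \log|x(2P)|\le c\log N .$$
   Context: ABC Conjecture over $\mathbb{Z}$: for every $\epsilon>0$ there is a constant $K_\epsilon$ such that for all coprime integers $a,b,c$ with $a+b=c$ one has $\max(|a|,|b|,|c|)\le K_\epsilon\,\mathrm{rad}(abc)^{1+\epsilon}$, where $\mathrm{rad}(m)$ is the product of the distinct primes dividing $m$. The constant $c$ may depend on the constants $K_\epsilon$ of the ABC Conjecture, but not on $N$ or $P$. For a rational point $Q\ne O$ on an elliptic curve in Weierstrass form over $\mathbb{Q}$, the length $L(Q)$ is the number of distinct primes $p$ with $|x(Q)|_p>1$, where $|\cdot|_p$ is the usual $p$-adic absolute value. Equivalently, write $x(Q)=A_Q/B_Q^2$ in lowest terms; then $L(Q)$ is the number of distinct prime divisors of $B_Q$. *)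

(* Defs.v *)
From HB Require Import structures.
From mathcomp Require Import all_boot all_order all_algebra.
From Stdlib Require Import Reals.
Set Implicit Arguments. Unset Strict Implicit. Unset Printing Implicit Defensive.
Import GRing.Theory Num.Theory.
Local Open Scope ring_scope.

(* radical of a natural number: product of its distinct prime divisors
   (rad 0 = rad 1 = 1 by the convention primes 0 = [::]) *)
Definition rad (n : nat) : nat := \prod_(p <- primes n) p.

Definition int2R (z : int) : R :=
  match z with
  | Posz n => INR n
  | Negz n => Ropp (INR n.+1)
  end.

Definition rat2R (q : rat) : R := Rdiv (int2R (numq q)) (int2R (denq q)).

Definition ABC : Prop :=
  forall eps : R, Rlt 0 eps ->
  exists K : R, forall a b c : int,
    coprimez a b -> coprimez a c -> coprimez b c -> GRing.add a b = c ->
    Rle (Rmax (int2R (Num.norm a)) (Rmax (int2R (Num.norm b)) (int2R (Num.norm c))))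
        (Rmult K (Rpower (INR (rad (absz (GRing.mul (GRing.mul a b) c)))) (Rplus 1 eps))).

Inductive pt := Inf | Aff of rat & rat.

Definition on_curve (N : nat) (P : pt) : Prop :=
  match P with
  | Inf => True
  | Aff x y => y ^+ 2 = x ^+ 3 - N%:R * x
  end.

(* chord-and-tangent group law on y^2 = x^3 + a x (here a = -N) *)
Definition add (N : nat) (P Q : pt) : pt :=
  match P, Q with
  | Inf, _ => Q
  | _, Inf => P
  | Aff x1 y1, Aff x2 y2 =>
      if x1 == x2 then
        if y1 == - y2 then Inf
        else let l := ((3%:R * x1 ^+ 2 - N%:R) / (2%:R * y1)) in
             let x3 := (l ^+ 2 - x1 - x2) in
             Aff x3 (l * (x1 - x3) - y1)
      else let l := ((y2 - y1) / (x2 - x1)) in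
           let x3 := (l ^+ 2 - x1 - x2) in
           Aff x3 (l * (x1 - x3) - y1)
  end.

Fixpoint mulpt (N : nat) (n : nat) (P : pt) : pt :=
  match n with
  | 0 => Inf
  | m.+1 => add N P (mulpt N m P)
  end.

Definition torsion (N : nat) (P : pt) : Prop :=
  exists n : nat, leq 1 n /\ mulpt N n P = Inf.

Definition xcoord (P : pt) : rat :=
  match P with Inf => 0 | Aff x _ => x end.

(* length L(Q): number of distinct primes dividing the denominator of x(Q)
   (x(Q) = A/B^2 in lowest terms, so these are the primes of B).
   The value at O is irrelevant (L is only applied to non-zero points). *)
Definition len (P : pt) : nat :=
  match P with
  | Inf => 0
  | Aff x _ => size (primes (absz (denq x)))
  end.

(* Main.v *)
Require Import Defs.
From HB Require Import structures.
From mathcomp Require Import all_boot all_order all_algebra.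
From Stdlib Require Import Reals.
From Stdlib Require Import Lia Lra Classical Ring Field.
From Stdlib Require PeanoNat.
From mathcomp Require Import ssrnat.
Set Implicit Arguments. Unset Strict Implicit. Unset Printing Implicit Defensive.


Ltac nat2 := rewrite ?expnS ?expn0 ?muln1 -?plusE -?multE -?minusE.

Lemma L0 (X Y : nat) : X ^ 2 = Y ^ 2 + 1 -> 0 < Y -> False.
Proof.
rewrite !expnS !expn0 !muln1 => H /ltP HY.
rewrite -?plusE -?multE in H. destruct (PeanoNat.Nat.le_gt_cases X Y); nia.
Qed.

Lemma cop_primes m n : (forall q, prime q -> q %| m -> q %| n -> False) -> coprime m n.
Proof.
move=> H; rewrite /coprime.
have [g1|g1] := leqP (gcdn m n) 1.
  case: (posnP (gcdn m n)) => [g0|gp]; last first.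
    by apply/eqP; apply/anti_leq; rewrite g1 gp.
  exfalso; apply: (H 2) => //.
    by apply: dvdn_trans (dvdn_gcdl m n); rewrite g0.
  by apply: dvdn_trans (dvdn_gcdr m n); rewrite g0.
exfalso; apply: (H (pdiv (gcdn m n))); first exact: pdiv_prime.
  exact: dvdn_trans (pdiv_dvd _) (dvdn_gcdl m n).
exact: dvdn_trans (pdiv_dvd _) (dvdn_gcdr m n).
Qed.

Lemma cop_div m n : 0 < gcdn m n -> coprime (m %/ gcdn m n) (n %/ gcdn m n).
Proof.
move=> gp; apply: cop_primes => q pq h1 h2.
rewrite dvdn_divRL ?dvdn_gcdl // in h1.
rewrite dvdn_divRL ?dvdn_gcdr // in h2.
have : q * gcdn m n %| 1 * gcdn m n by rewrite mul1n dvdn_gcd h1 h2.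
by rewrite dvdn_pmul2r // Euclid_dvd1.
Qed.

Lemma sq_cop u v m : coprime u v -> u * v = m ^ 2 -> exists r, u = r ^ 2.
Proof.
move=> cuv huv.
case: (posnP u) => [->|up]; first by exists 0.
set g := gcdn u m.
have gp : 0 < g by rewrite gcdn_gt0 up.
exists g; apply/eqP; rewrite eqn_dvd; apply/andP; split.
  have cu'm' : coprime (u %/ g) (m %/ g) by exact: cop_div.
  have hu' : u = u %/ g * g by rewrite divnK // dvdn_gcdl.
  have hm' : m = m %/ g * g by rewrite divnK // dvdn_gcdr.
  move: cu'm' hu' hm'; set u' := u %/ g; set m' := m %/ g => cu'm' hu' hm'.
  have e1 : u' * v = g * m' ^ 2.
    apply/eqP; rewrite -(eqn_pmul2r gp); apply/eqP.
    have h := huv; rewrite {1}hu' {1}hm' in h.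
    rewrite !expnS !expn0 !muln1 in h *.
    rewrite -!multE in h *. nia.
  have : u' %| g by rewrite -(Gauss_dvdl _ (coprimeXr 2 cu'm')) -e1 dvdn_mulr.
  by rewrite hu' expnS expn1 => h; apply: dvdn_mul.
have : g ^ 2 %| u * v by rewrite huv dvdn_exp2r // dvdn_gcdr.
rewrite Gauss_dvdl //. apply: coprimeXl; apply: coprime_dvdl cuv; exact: dvdn_gcdl.
Qed.


Lemma prod_dvd (s : seq nat) M : uniq s -> all prime s -> (forall q, q \in s -> q %| M) ->
  \prod_(q <- s) q %| M.
Proof.
elim: s => [|q s IH] /=; first by rewrite big_nil dvd1n.
move=> /andP[qs us] /andP[pq ps] H.
rewrite big_cons Gauss_dvd; last first.
  rewrite big_seq; apply: (big_ind (fun n => coprime q n)).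
  - exact: coprimen1.
  - by move=> x y h1 h2; rewrite coprimeMr h1 h2.
  - move=> r rs; rewrite prime_coprime // dvdn_prime2 //; last by move/allP: ps; apply.
    by apply/eqP => qr; move: qs; rewrite qr rs.
by rewrite H ?mem_head ?IH // => r rs; apply: H; rewrite in_cons rs orbT.
Qed.

Lemma rad_dvd n M : (forall q, prime q -> q %| n -> q %| M) -> Defs.rad n %| M.
Proof.
move=> H; rewrite /Defs.rad; apply: prod_dvd; [exact: primes_uniq | exact: all_prime_primes |].
by move=> q; rewrite mem_primes => /and3P[pq _ qn]; apply: H.
Qed.

Definition ABCn (Kn : nat) := forall u v z : nat, coprime u v -> coprime u z -> coprime v z ->
  u + v = z -> z ^ 6 <= Kn * Defs.rad (u * v * z) ^ 7.

Lemma rad_gt0 n : 0 < Defs.rad n.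
Proof. rewrite /Defs.rad; elim: (primes n) (all_prime_primes n) => [|q s IH] /=; first by rewrite big_nil.
by move=> /andP[pq ps]; rewrite big_cons muln_gt0 prime_gt0 // IH. Qed.

Lemma expn_pow m n : expn m n = Nat.pow m n.
Proof. elim: n => [|n IH] //. by rewrite expnS IH. Qed.

Lemma ABC_nat : ABC -> exists Kn : nat, 0 < Kn /\ ABCn Kn.
Proof.
move=> H.
have [K HK] := H (1/6)%R ltac:(lra).
have [n Hn] := INR_unbounded (K ^ 6)%R.
exists n.+1; split => // u v z cuv cuz cvz e.
have := HK (Posz u) (Posz v) (Posz z).
have cz : forall a b : nat, coprime a b -> coprimez (Posz a) (Posz b) by [].
move/(_ (cz _ _ cuv) (cz _ _ cuz) (cz _ _ cvz)).
have e' : GRing.add (Posz u) (Posz v) = Posz z by rewrite -PoszD e.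
move/(_ e').
rewrite -!PoszM /=.
set r := INR (Defs.rad (u * v * z)).
have rp : (0 < r)%R by apply: lt_0_INR; apply/ltP; exact: rad_gt0.
move=> Hle.
have hz : (INR z <= K * Rpower r (1 + 1 / 6))%R.
  apply: Rle_trans Hle. apply: Rle_trans (Rmax_r _ _). exact: Rmax_r.
have h6 : (INR z ^ 6 <= K ^ 6 * r ^ 7)%R.
  have -> : (r ^ 7 = (Rpower r (1 + 1 / 6)) ^ 6)%R.
    rewrite -(@Rpower_pow 6 (Rpower r (1 + 1/6))); last by rewrite /Rpower; apply: exp_pos.
    rewrite Rpower_mult -(@Rpower_pow 7 r rp). f_equal. simpl. field.
  rewrite -Rpow_mult_distr. apply: pow_incr; split => //. exact: pos_INR.
apply/leP; apply: INR_le.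
rewrite !expn_pow pow_INR mult_INR pow_INR -/r.
apply: Rle_trans h6 _.
apply: Rmult_le_compat_r; first by apply: pow_le; lra.
rewrite S_INR; lra.
Qed.


Definition badp (N a d w q : nat) := prime q /\
  (q %| d \/ (q %| a /\ ~~ (q %| N)) \/ (q %| w /\ ~~ (q %| 2 * N))).

Lemma dvd_cop_false p a d : prime p -> p %| a -> p %| d -> coprime a d -> False.
Proof.
move=> pp pa pd /eqP c. have : p %| gcdn a d by rewrite dvdn_gcd pa pd.
by rewrite c Euclid_dvd1.
Qed.

Lemma coreN1 a d w mm : 0 < a -> 0 < d -> 0 < w -> coprime a d -> mm ^ 2 = a * w ->
  (w + 1 * d ^ 2 = a ^ 2 \/ a ^ 2 + w = 1 * d ^ 2) ->
  (forall q1 q2, badp 1 a d w q1 -> badp 1 a d w q2 -> q1 = q2) -> False.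
Proof.
move=> ap dp wp cad hmm heq Hbad.
have mmp : 0 < mm.
  case: (posnP mm) => // m0. move: hmm; rewrite m0 => /esym/eqP; rewrite muln_eq0.
  by case/orP => /eqP h; [move: ap | move: wp]; rewrite h.
have [d1|d1|d1] := ltngtP d 1.
- by move: dp; rewrite ltnNge -ltnS d1.
- have pdp := pdiv_prime d1.
  have bp : badp 1 a d w (pdiv d) by split => //; left; exact: pdiv_dvd.
  have a1 : a = 1.
    apply/eqP; rewrite eqn_leq ap andbT leqNgt; apply/negP => a1.
    have bq : badp 1 a d w (pdiv a).
      split; first exact: pdiv_prime.
      by right; left; rewrite pdiv_dvd Euclid_dvd1 //; exact: pdiv_prime.
    have := Hbad _ _ bq bp => e.
    apply: (dvd_cop_false pdp _ (pdiv_dvd d) cad). by rewrite -e pdiv_dvd.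
  move: heq hmm; rewrite a1 mul1n => heq hmm.
  case: heq => heq.
  + move: heq d1; nat2 => heq /ltP d1. lia.
  + apply: (@L0 d mm) => //. by rewrite hmm addnC -heq exp1n mul1n.
- move: heq; rewrite d1 exp1n muln1 => -[heq|heq]; last first.
    move: heq ap wp; nat2 => heq /ltP ap /ltP wp. lia.
  have caw : coprime a w.
    apply: cop_primes => q pq qa qw.
    have : q %| a ^ 2 by rewrite Euclid_dvdX // qa.
    by rewrite -heq dvdn_addr // Euclid_dvd1.
  have [al hal] := sq_cop caw (esym hmm).
  have cwa : coprime w a by rewrite coprime_sym.
  have hmm' : w * a = mm ^ 2 by rewrite mulnC.
  have [be hbe] := sq_cop cwa hmm'.
  apply: (@L0 (al ^ 2) be).
    by rewrite -hal -heq hbe addnC.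
  by move: wp; rewrite hbe; case: be {hbe}.
Qed.


Lemma lexp m n k : m <= n -> m ^ k <= n ^ k.
Proof. by move=> h; elim: k => [|k IH] //; rewrite !expnS leq_mul. Qed.

Lemma lexp_cancel x i j C : 0 < x -> x ^ (i + j) <= C * x ^ j -> x ^ i <= C.
Proof. by move=> xp; rewrite expnD leq_pmul2r // expn_gt0 xp. Qed.

Lemma le_self_pow x k : 0 < x -> 0 < k -> x <= x ^ k.
Proof. move=> xp kp; rewrite -{1}(expn1 x); exact: leq_pexp2l. Qed.

Lemma arith T z a d pp : 0 < T -> 0 < a -> 0 < d ->
  z ^ 6 <= T ^ 8 * pp ^ 7 -> a ^ 2 <= T * z -> d ^ 2 <= T * z ->
  (1 < d -> pp <= d) -> (d = 1 -> pp ^ 2 <= T * a ^ 3) -> a <= T ^ 112 /\ d <= T ^ 112.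
Proof.
move=> Tp ap dp hz ha hd hd1 hd2.
have H6 : forall x, x ^ 2 <= T * z -> x ^ 12 <= T ^ 14 * pp ^ 7.
  move=> x hx; have := lexp 6 hx; rewrite -expnM expnMn => h.
  apply: leq_trans h _. by rewrite (_ : 14 = 6 + 8) // expnD -mulnA leq_mul2l hz orbT.
have [d1|d1] := leqP d 1.
  have d1' : d = 1 by apply/eqP; rewrite eqn_leq d1 dp.
  split; last by rewrite d1' expn_gt0 Tp.
  have hp : pp ^ 14 <= T ^ 7 * a ^ 21.
    rewrite (_ : 14 = 2 * 7) // expnM (_ : 21 = 3 * 7) // expnM -expnMn.
    exact: lexp (hd2 d1').
  have h24 : a ^ 24 <= T ^ 35 * a ^ 21.
    have := lexp 2 (H6 a ha); rewrite -expnM expnMn -!expnM => h.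
    apply: leq_trans h _.
    rewrite (_ : 35 = 28 + 7) // expnD -mulnA. exact: leq_mul (leqnn _) hp.
  have h3 := lexp_cancel (i := 3) ap h24.
  apply: leq_trans (@le_self_pow a 3 ap isT) _ => //.
  apply: leq_trans h3 _. exact: leq_pexp2l.
have hd12 : d ^ (5 + 7) <= T ^ 14 * d ^ 7.
  apply: leq_trans (H6 d hd) _. by rewrite leq_mul2l lexp ?orbT // hd1.
have hd5 := lexp_cancel dp hd12.
have dT : d <= T ^ 14 by apply: leq_trans (@le_self_pow d 5 dp isT) hd5.
split; last by apply: leq_trans dT _; exact: leq_pexp2l.
apply: leq_trans (@le_self_pow a 12 ap isT) _ => //.
apply: leq_trans (H6 a ha) _.
rewrite (_ : 112 = 14 + 14 * 7) // expnD leq_mul2l expnM; apply/orP; right.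
apply: lexp; apply: leq_trans (hd1 d1) dT.
Qed.


Lemma triple X Y S g : 0 < g -> g %| X -> g %| Y -> coprime (X %/ g) (Y %/ g) -> S + Y = X ->
  [/\ coprime (S %/ g) (Y %/ g), coprime (S %/ g) (X %/ g), coprime (Y %/ g) (X %/ g),
      S %/ g + Y %/ g = X %/ g & g %| S].
Proof.
move=> gp gX gY cXY e.
have gS : g %| S by move: gX; rewrite -e dvdn_addl.
have eqd : S %/ g + Y %/ g = X %/ g.
  by apply/eqP; rewrite -(eqn_pmul2r gp) mulnDl !divnK // e.
have cYX : coprime (Y %/ g) (X %/ g) by rewrite coprime_sym.
have cSY : coprime (S %/ g) (Y %/ g).
  by move: cYX; rewrite -eqd /coprime gcdnDr gcdnC.
split => //. by rewrite -eqd /coprime gcdnDl.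
Qed.

Lemma tripleE N a d w : 0 < N -> 0 < a -> 0 < d -> coprime a d ->
  (w + N * d ^ 2 = a ^ 2 \/ a ^ 2 + w = N * d ^ 2) ->
  exists u v z, [/\ coprime u v, coprime u z, coprime v z, u + v = z &
    [/\ a ^ 2 <= N * z, d ^ 2 <= N * z &
     forall q, prime q -> q %| u * v * z -> [\/ q %| a, q %| N, q %| d | q %| w]]].
Proof.
move=> Np ap dp cad heq.
set g := gcdn (a ^ 2) (N * d ^ 2).
have gp : 0 < g by rewrite gcdn_gt0 expn_gt0 ap.
have ga : g %| a ^ 2 by exact: dvdn_gcdl.
have gn : g %| N * d ^ 2 by exact: dvdn_gcdr.
have gN : g %| N.
  have cg : coprime g (d ^ 2).
    exact: (coprime_dvdl ga (coprimeXl 2 (coprimeXr 2 cad))).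
  by rewrite -(Gauss_dvdl _ cg).
have gle : g <= N by apply: dvdn_leq.
have c0 : coprime (a ^ 2 %/ g) (N * d ^ 2 %/ g) by exact: cop_div.
have hd2 : d ^ 2 <= N * d ^ 2 by apply: leq_pmull.
have Hq : forall q, prime q -> q %| a ^ 2 \/ q %| N * d ^ 2 \/ q %| w ->
    [\/ q %| a, q %| N, q %| d | q %| w].
  move=> q pq [h|[h|h]].
  - by constructor 1; move: h; rewrite Euclid_dvdX // => /andP[].
  - move: h; rewrite Euclid_dvdM // => /orP[h|h]; first by constructor 2.
    by constructor 3; move: h; rewrite Euclid_dvdX // => /andP[].
  - by constructor 4.
case: heq => heq.
- have [c1 c2 c3 e gw] := triple gp ga gn c0 heq.
  exists (w %/ g), (N * d ^ 2 %/ g), (a ^ 2 %/ g); split => //; split.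
  + by rewrite -{1}(divnK ga) mulnC leq_mul2r gle orbT.
  + apply: leq_trans hd2 _. rewrite -{1}(divnK gn) mulnC; apply: leq_mul => //.
    by rewrite -e leq_addl.
  + move=> q pq; rewrite !Euclid_dvdM // => /orP[/orP[h|h]|h]; apply: Hq => //.
    * by right; right; apply: dvdn_trans h (@dvdn_div _ _ gw).
    * by right; left; apply: dvdn_trans h (@dvdn_div _ _ gn).
    * by left; apply: dvdn_trans h (@dvdn_div _ _ ga).
- have c0' : coprime (N * d ^ 2 %/ g) (a ^ 2 %/ g) by rewrite coprime_sym.
  have heq' : w + a ^ 2 = N * d ^ 2 by rewrite addnC.
  have [c1 c2 c3 e gw] := triple gp gn ga c0' heq'.
  exists (w %/ g), (a ^ 2 %/ g), (N * d ^ 2 %/ g); split => //; split.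
  + apply: leq_trans (_ : a ^ 2 <= N * d ^ 2 %/ g * g) _.
      by rewrite divnK // -heq leq_addr.
    by rewrite mulnC leq_mul2r gle orbT.
  + by apply: leq_trans hd2 _; rewrite -{1}(divnK gn) mulnC leq_mul2r gle orbT.
  + move=> q pq; rewrite !Euclid_dvdM // => /orP[/orP[h|h]|h]; apply: Hq => //.
    * by right; right; apply: dvdn_trans h (@dvdn_div _ _ gw).
    * by left; apply: dvdn_trans h (@dvdn_div _ _ ga).
    * by right; left; apply: dvdn_trans h (@dvdn_div _ _ gn).
Qed.

Lemma core_bound Kn N a d w mm : ABCn Kn -> 0 < Kn -> 0 < N -> 0 < a -> 0 < d -> 0 < w ->
  coprime a d -> mm ^ 2 = a * w ->
  (w + N * d ^ 2 = a ^ 2 \/ a ^ 2 + w = N * d ^ 2) ->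
  (forall q1 q2, badp N a d w q1 -> badp N a d w q2 -> q1 = q2) ->
  a <= (Kn * (2 * N)) ^ 112 /\ d <= (Kn * (2 * N)) ^ 112.
Proof.
move=> HK Kp Np ap dp wp cad hmm heq Hbad.
have [u [v [z [c1 c2 c3 e [ha hd Hq]]]]] := tripleE Np ap dp cad heq.
have awp : 0 < a * w by rewrite muln_gt0 ap wp.
have mmp : 0 < mm by move: awp; rewrite -hmm expn_gt0 orbF.
have [pp [ppp Hpp hd1 hd2]] : exists pp, [/\ 0 < pp,
    (forall q, prime q -> [\/ q %| a, q %| N, q %| d | q %| w] -> q %| 2 * N * pp),
    (1 < d -> pp <= d) & (d = 1 -> pp ^ 2 <= a * w)].
  have q2N : forall q k, q %| N -> q %| 2 * N * k.
    by move=> q k h; apply: dvdn_mulr; apply: dvdn_mull.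
  have q2N' : forall q k, q %| 2 * N -> q %| 2 * N * k.
    by move=> q k h; apply: dvdn_mulr.
  case: (classic (exists q, badp N a d w q)) => [[p0 bp0]|nob].
  - have pp0 : prime p0 by case: bp0.
    have Hp0 : forall q, badp N a d w q -> q %| 2 * N * p0.
      by move=> q bq; rewrite (Hbad _ _ bq bp0); apply: dvdn_mull.
    exists p0; split; first exact: prime_gt0.
    + move=> q pq [h|h|h|h].
      * case: (boolP (q %| N)) => hN; first exact: q2N.
        by apply: Hp0; split => //; right; left.
      * exact: q2N.
      * by apply: Hp0; split => //; left.
      * case: (boolP (q %| 2 * N)) => hN; first exact: q2N'.
        by apply: Hp0; split => //; right; right.
    + move=> d1. have bd : badp N a d w (pdiv d) by split; [exact: pdiv_prime | left; exact: pdiv_dvd].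
      by rewrite (Hbad _ _ bp0 bd); exact: pdiv_leq.
    + move=> d1. have h : p0 %| mm ^ 2.
        case: bp0 => _ [h|[[h _]|[h _]]].
        * by move: h; rewrite d1 Euclid_dvd1.
        * by rewrite hmm dvdn_mulr.
        * by rewrite hmm dvdn_mull.
      move: h; rewrite Euclid_dvdX // andbT => h.
      by rewrite -hmm leq_sqr; apply: dvdn_leq.
  - have nb : forall q, badp N a d w q -> False by move=> q bq; apply: nob; exists q.
    exists 1; split; first by [].
    + move=> q pq [h|h|h|h].
      * case: (boolP (q %| N)) => hN; first exact: q2N.
        by exfalso; apply: (nb q); split => //; right; left.
      * exact: q2N.
      * by exfalso; apply: (nb q); split => //; left.
      * case: (boolP (q %| 2 * N)) => hN; first exact: q2N'.
        by exfalso; apply: (nb q); split => //; right; right.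
    + move=> d1; exfalso; apply: (nb (pdiv d)).
      by split; [exact: pdiv_prime | left; exact: pdiv_dvd].
    + by move=> _; rewrite exp1n.
have hR : Defs.rad (u * v * z) <= 2 * N * pp.
  apply: dvdn_leq; first by rewrite !muln_gt0 Np ppp.
  apply: rad_dvd => q pq h; apply: Hpp => //; exact: Hq.
set T := Kn * (2 * N).
have KT : Kn <= T by apply: leq_pmulr; rewrite muln_gt0 Np.
have NT' : 2 * N <= T by apply: leq_pmull.
have NT : N <= T by apply: leq_trans NT'; apply: leq_pmull.
have Tp : 0 < T by rewrite muln_gt0 Kp muln_gt0 Np.
have h1 : z ^ 6 <= T ^ 8 * pp ^ 7.
  apply: leq_trans (HK u v z c1 c2 c3 e) _.
  apply: (@leq_trans (T * (T * pp) ^ 7)); last by rewrite expnMn mulnA -expnS.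
  apply: leq_mul => //; apply: lexp; apply: leq_trans hR _.
  by rewrite leq_mul2r NT' orbT.
have h2 : a ^ 2 <= T * z by apply: leq_trans ha _; rewrite leq_mul2r NT orbT.
have h3 : d ^ 2 <= T * z by apply: leq_trans hd _; rewrite leq_mul2r NT orbT.
have h4 : d = 1 -> pp ^ 2 <= T * a ^ 3.
  move=> d1; apply: leq_trans (hd2 d1) _.
  have hw : w <= N * a ^ 2.
    case: heq => heq.
      apply: leq_trans (_ : w <= a ^ 2) _; first by rewrite -heq leq_addr.
      by apply: leq_pmull.
    apply: leq_trans (_ : w <= N) _.
      by move: heq; rewrite d1 exp1n muln1 => <-; rewrite leq_addl.
    by apply: leq_pmulr; rewrite expn_gt0 ap.
  rewrite (_ : 3 = 1 + 2) // expnD expn1 mulnCA; apply: leq_mul => //.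
  by apply: leq_trans hw _; rewrite leq_mul2r NT orbT.
exact: (arith Tp ap dp h1 h2 h3 hd1 h4).
Qed.

Module M6.
Import GRing.Theory Num.Theory.
Local Open Scope ring_scope.

Lemma qring : @ring_theory rat zeroq oneq addq mulq (fun x y => addq x (oppq y)) oppq eq.
Proof.
constructor; intros.
- exact: (@add0r rat).
- exact: (@addrC rat).
- exact: (@addrA rat).
- exact: (@mul1r rat).
- exact: (@mulrC rat).
- exact: (@mulrA rat).
- exact: (@mulrDl rat).
- by [].
- exact: (@subrr rat).
Qed.
Lemma qfield : @field_theory rat zeroq oneq addq mulq (fun x y => addq x (oppq y)) oppq
  (fun x y => mulq x (invq y)) invq eq.
Proof.
constructor; [exact qring| by [] | by [] | ].
move=> p Hp. exact: (@mulVf rat p (introN eqP Hp)).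
Qed.
Add Field qF : qfield.

Lemma qaddE (x y : rat) : x + y = addq x y. Proof. by []. Qed.
Lemma qmulE (x y : rat) : x * y = mulq x y. Proof. by []. Qed.
Lemma qoppE (x : rat) : - x = oppq x. Proof. by []. Qed.
Lemma qinvE (x : rat) : x^-1 = invq x. Proof. by []. Qed.
Lemma q0E : (0:rat) = zeroq. Proof. by []. Qed.
Lemma q1E : (1:rat) = oneq. Proof. by []. Qed.
Lemma q2E : (2%:R:rat) = 1 + 1. Proof. by []. Qed.
Lemma q3E : (3%:R:rat) = 1 + 1 + 1. Proof. by rewrite !mulrS mulr0n addr0 addrA. Qed.
Lemma q4E : (4%:R:rat) = 1 + 1 + 1 + 1. Proof. by rewrite !mulrS mulr0n addr0 !addrA. Qed.
Lemma qX2 (x : rat) : x ^+ 2 = x * x. Proof. by rewrite expr2. Qed.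
Lemma qX3 (x : rat) : x ^+ 3 = x * x * x. Proof. by rewrite !exprS expr0 mulr1 mulrA. Qed.
Ltac qsimpl := rewrite ?q2E ?q3E ?q4E ?qX2 ?qX3 ?qaddE ?qmulE ?qoppE ?qinvE ?q0E ?q1E;
  match goal with |- @eq _ ?a ?b => change (@eq rat a b) end.
Ltac qnz := repeat split; try assumption; apply/eqP; by [].

Lemma F1 (x y n : rat) : y != 0 -> y ^+ 2 = x ^+ 3 - n * x ->
  ((3%:R * x ^+ 2 - n) / (2%:R * y)) ^+ 2 - x - x = (x ^+ 2 + n) ^+ 2 / (4%:R * y ^+ 2).
Proof.
move=> /eqP yn h.
have -> : ((3%:R * x ^+ 2 - n) / (2%:R * y)) ^+ 2 - x - x =
   (x ^+ 2 + n) ^+ 2 / (4%:R * y ^+ 2) + 2%:R * x * (x ^+ 3 - n * x - y ^+ 2) / y ^+ 2.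
  qsimpl. field. qnz.
by rewrite -h subrr mulr0 mul0r addr0.
Qed.

Lemma F2 (A D m e n : rat) : D != 0 -> e != 0 -> (m / e) ^+ 2 = (A / D) ^+ 3 - n * (A / D) ->
  m ^+ 2 * D ^+ 3 = e ^+ 2 * (A * (A ^+ 2 - n * D ^+ 2)).
Proof.
move=> /eqP Dn /eqP en h; apply/eqP; rewrite -subr_eq0; apply/eqP.
have -> : m ^+ 2 * D ^+ 3 - e ^+ 2 * (A * (A ^+ 2 - n * D ^+ 2)) =
  e ^+ 2 * D ^+ 3 * ((m / e) ^+ 2 - ((A / D) ^+ 3 - n * (A / D))).
  qsimpl. field. qnz.
by rewrite h subrr mulr0.
Qed.

Lemma F3 (A D m e n X : rat) : D != 0 -> e != 0 -> m != 0 -> e ^+ 2 = D ^+ 3 ->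
  X = ((A / D) ^+ 2 + n) ^+ 2 / (4%:R * (m / e) ^+ 2) ->
  X * (4%:R * D * m ^+ 2) = (A ^+ 2 + n * D ^+ 2) ^+ 2.
Proof.
move=> Dn en mn he ->.
have -> : ((A / D) ^+ 2 + n) ^+ 2 / (4%:R * (m / e) ^+ 2) * (4%:R * D * m ^+ 2) =
   (A ^+ 2 + n * D ^+ 2) ^+ 2 * e ^+ 2 / D ^+ 3.
  move/eqP: Dn => Dn; move/eqP: en => en; move/eqP: mn => mn.
  qsimpl. field. qnz.
by rewrite he mulfK // expf_neq0.
Qed.

End M6.
Import M6.

Module M7.
Import Order.TTheory GRing.Theory Num.Theory.
Local Open Scope ring_scope.

Lemma intrX (z : int) n : (z ^+ n)%:~R = (z%:~R : rat) ^+ n.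
Proof. elim: n => [|n IH]; first by rewrite !expr0. by rewrite !exprS intrM IH. Qed.

Lemma PoszX (n k : nat) : Posz (n ^ k)%N = (Posz n) ^+ k.
Proof. elim: k => [|k IH] //; by rewrite expnS exprS PoszM IH. Qed.

Ltac ipush := repeat (first [rewrite intrX | rewrite intrB | rewrite intrD | rewrite intrM]).

Lemma extract (N : nat) (x y : rat) : (0 < N)%N -> y != 0 -> y ^+ 2 = x ^+ 3 - N%:R * x ->
  exists a d w mm : nat, [/\ (0 < a)%N, (0 < d)%N, (0 < w)%N, coprime a d & (mm ^ 2 = a * w)%N] /\
     (w + N * d ^ 2 = a ^ 2 \/ a ^ 2 + w = N * d ^ 2)%N /\
     [/\ `|numq x|%N = a, `|denq x|%N = d &
      (`|numq (((3%:R * x ^+ 2 - N%:R) / (2%:R * y)) ^+ 2 - x - x)| * (4 * d * (a * w)) =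
        (a ^ 2 + N * d ^ 2) ^ 2 * `|denq (((3%:R * x ^+ 2 - N%:R) / (2%:R * y)) ^+ 2 - x - x)|)%N].
Proof.
move=> Np yn hc.
set X3 := ((3%:R * x ^+ 2 - N%:R) / (2%:R * y)) ^+ 2 - x - x.
set A := numq x; set D := denq x; set m := numq y; set e := denq y.
have hx : x = A%:~R / D%:~R by rewrite divq_num_den.
have hy : y = m%:~R / e%:~R by rewrite divq_num_den.
have Dn : (D%:~R : rat) != 0 by rewrite intr_eq0 denq_neq0.
have en : (e%:~R : rat) != 0 by rewrite intr_eq0 denq_neq0.
have mn : (m%:~R : rat) != 0 by rewrite intr_eq0 numq_eq0.
have I1q := F2 (A := A%:~R) (n := N%:R) Dn en (etrans (esym (congr1 (fun t => t ^+ 2) hy)) (etrans hc (congr1 (fun t => t ^+ 3 - N%:R * t) hx))).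
have I1 : m ^+ 2 * D ^+ 3 = e ^+ 2 * (A * (A ^+ 2 - N%:Z * D ^+ 2)) :> int.
  apply: (intr_inj (R := rat)). ipush. exact: I1q.
set W := A ^+ 2 - N%:Z * D ^+ 2.
set a := `|A|%N; set d := `|D|%N; set mm := `|m|%N; set ee := `|e|%N; set w := `|W|%N.
have E : (mm ^ 2 * d ^ 3 = ee ^ 2 * (a * w))%N.
  have := congr1 absz I1; rewrite !abszM => h; exact: h.
have cad : coprime a d by exact: coprime_num_den.
have cme : coprime mm ee by exact: coprime_num_den.
have mmp : (0 < mm)%N by rewrite absz_gt0 numq_eq0.
have dp : (0 < d)%N by rewrite absz_gt0 denq_neq0.
have eep : (0 < ee)%N by rewrite absz_gt0 denq_neq0.
have awp : (0 < a * w)%N.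
  have : (0 < mm ^ 2 * d ^ 3)%N by rewrite muln_gt0 !expn_gt0 mmp dp.
  by rewrite E muln_gt0 => /andP[].
have ap : (0 < a)%N by move: awp; rewrite muln_gt0 => /andP[].
have wp : (0 < w)%N by move: awp; rewrite muln_gt0 => /andP[].
have hA2 : Posz (a ^ 2) = A ^+ 2 by rewrite -abszX gez0_abs // sqr_ge0.
have hD : Posz d = D by rewrite gtz0_abs // denq_gt0.
have hE : Posz ee = e by rewrite gtz0_abs // denq_gt0.
have hND : Posz (N * d ^ 2) = N%:Z * D ^+ 2 by rewrite PoszM PoszX hD.
have heq : (w + N * d ^ 2 = a ^ 2 \/ a ^ 2 + w = N * d ^ 2)%N.
  case: (boolP (0 <= W)) => hW.
    left; apply/eqP; rewrite -eqz_nat PoszD hND hA2 gez0_abs //.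
    by rewrite /W subrK.
  right; apply/eqP; rewrite -eqz_nat PoszD hND hA2 ltz0_abs; last by rewrite ltNge.
  by rewrite /W opprB addrC subrK.
have cwd : coprime w d.
  apply: cop_primes => q pq qw qd.
  have qa2 : (q %| a ^ 2)%N.
    have qN : (q %| N * d ^ 2)%N by apply: dvdn_mull; rewrite Euclid_dvdX // qd.
    case: heq => heq; first by rewrite -heq dvdn_add.
    by move: qN; rewrite -heq dvdn_addl.
  by apply: (dvd_cop_false pq _ qd cad); move: qa2; rewrite Euclid_dvdX // => /andP[].
have ed : (ee ^ 2 = d ^ 3)%N.
  apply/eqP; rewrite eqn_dvd; apply/andP; split.
    have : (ee ^ 2 %| mm ^ 2 * d ^ 3)%N by rewrite E dvdn_mulr.
    by rewrite Gauss_dvdr // coprimeXl // coprimeXr // coprime_sym.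
  have : (d ^ 3 %| ee ^ 2 * (a * w))%N by rewrite -E dvdn_mull.
  rewrite Gauss_dvdl //; apply: coprimeXl.
  by rewrite coprimeMr (coprime_sym d a) cad (coprime_sym d w) cwd.
have hmm : (mm ^ 2 = a * w)%N.
  apply/eqP; rewrite -(@eqn_pmul2r (d ^ 3)) ?expn_gt0 ?dp //; apply/eqP.
  by rewrite E ed mulnC.
have he2 : (e%:~R : rat) ^+ 2 = (D%:~R) ^+ 3.
  have h : e ^+ 2 = D ^+ 3 by rewrite -hE -hD -!PoszX ed.
  by rewrite -!intrX h.
have hX3 : X3 = (((A%:~R / D%:~R) ^+ 2 + N%:R) ^+ 2 / (4%:R * (m%:~R / e%:~R) ^+ 2)).
  by rewrite /X3 (F1 yn hc) {1}hx hy.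
have I2q := F3 (A := A%:~R) (n := N%:R) Dn en mn he2 hX3.
set n3 := numq X3; set d3 := denq X3.
have I2 : n3 * (4%:Z * D * m ^+ 2) = (A ^+ 2 + N%:Z * D ^+ 2) ^+ 2 * d3 :> int.
  apply: (intr_inj (R := rat)). ipush. rewrite numqE. 
  have h4 : ((4%:Z)%:~R : rat) = 4%:R by [].
  have hN : ((Posz N)%:~R : rat) = N%:R by [].
  by rewrite h4 hN mulrAC I2q.
have hU : A ^+ 2 + N%:Z * D ^+ 2 = Posz (a ^ 2 + N * d ^ 2)%N by rewrite PoszD hA2 hND.
have := congr1 absz I2; rewrite hU !abszM => h.
exists a, d, w, mm; split; first by split.
split; first exact: heq.
split => //. rewrite -hmm. exact: h.
Qed.

End M7.
Import M7.


Lemma bad_dvd N a d w n3 d3 q : coprime a d ->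
  (w + N * d ^ 2 = a ^ 2 \/ a ^ 2 + w = N * d ^ 2) ->
  n3 * (4 * d * (a * w)) = (a ^ 2 + N * d ^ 2) ^ 2 * d3 ->
  badp N a d w q -> q %| d3.
Proof.
move=> cad heq E [pq hq].
have qV : q %| (a ^ 2 + N * d ^ 2) ^ 2 * d3.
  rewrite -E; apply: dvdn_mull.
  case: hq => [h|[[h _]|[h _]]].
  - by apply: dvdn_mulr; apply: dvdn_mull.
  - by apply: dvdn_mull; apply: dvdn_mulr.
  - by apply: dvdn_mull; apply: dvdn_mull.
have nU : ~~ (q %| a ^ 2 + N * d ^ 2).
  apply/negP => qU.
  have qd2 : q %| d -> q %| d ^ 2 by move=> h; rewrite Euclid_dvdX // h.
  have qa2 : q %| a -> q %| a ^ 2 by move=> h; rewrite Euclid_dvdX // h.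
  have qa2' : q %| a ^ 2 -> q %| a by rewrite Euclid_dvdX // => /andP[].
  have qdd : q %| d ^ 2 -> q %| d by rewrite Euclid_dvdX // => /andP[].
  case: hq => [h|[[h hN]|[h hN]]].
  - apply: (dvd_cop_false pq _ h cad); apply: qa2'.
    by move: qU; rewrite dvdn_addl // dvdn_mull // qd2.
  - move: qU; rewrite dvdn_addr ?qa2 // Euclid_dvdM // (negbTE hN) /= => /qdd qd.
    exact: (dvd_cop_false pq h qd cad).
  - case: heq => heq.
    + have e2 : a ^ 2 + N * d ^ 2 = w + 2 * N * d ^ 2.
        by rewrite -heq -addnA addnn -mul2n mulnA.
      have [h2 hN'] : ~~ (q %| 2) /\ ~~ (q %| N).
        by move: hN; rewrite Euclid_dvdM // negb_or => /andP[].
      move: qU; rewrite e2 dvdn_addr // -mulnA Euclid_dvdM // Euclid_dvdM //.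
      rewrite (negbTE h2) (negbTE hN') /= => /qdd qd.
      apply: (dvd_cop_false pq _ qd cad); apply: qa2'.
      by rewrite -heq dvdn_add // dvdn_mull // qd2.
    + have e2 : a ^ 2 + N * d ^ 2 = w + 2 * a ^ 2.
        move: heq; set X := a ^ 2; set Y := N * d ^ 2 => heq.
        rewrite -heq -?plusE -?multE; lia.
      move: qU; rewrite e2 dvdn_addr // Euclid_dvdM // => /orP[q2|/qa2' qa].
        by move: hN; rewrite Euclid_dvdM // q2.
      have : q %| N * d ^ 2 by rewrite -heq dvdn_add // qa2.
      rewrite Euclid_dvdM // => /orP[qN|/qdd qd].
        by move: hN; rewrite Euclid_dvdM // qN orbT.
      exact: (dvd_cop_false pq qa qd cad).
by move: qV; rewrite Euclid_dvdM // Euclid_dvdX // (negbTE nU).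
Qed.

Lemma bad_unique N a d w n3 d3 : 0 < d3 -> coprime a d ->
  (w + N * d ^ 2 = a ^ 2 \/ a ^ 2 + w = N * d ^ 2) ->
  n3 * (4 * d * (a * w)) = (a ^ 2 + N * d ^ 2) ^ 2 * d3 ->
  (size (primes d3) <= 1)%N ->
  forall q1 q2, badp N a d w q1 -> badp N a d w q2 -> q1 = q2.
Proof.
move=> d3p cad heq E hs q1 q2 b1 b2.
have m1 : q1 \in primes d3 by rewrite mem_primes d3p (bad_dvd cad heq E b1); case: b1 => ->.
have m2 : q2 \in primes d3 by rewrite mem_primes d3p (bad_dvd cad heq E b2); case: b2 => ->.
move: hs m1 m2; case: (primes d3) => [|r [|r' s]] //=.
by rewrite !inE => _ /eqP -> /eqP ->.
Qed.

Module M9.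

Local Open Scope R_scope.

Lemma Rabs_int2R z : Rabs (int2R z) = INR `|z|%N.
Proof.
case: z => n; rewrite /int2R; first by rewrite Rabs_pos_eq; [by [] | exact (pos_INR n)].
by rewrite Rabs_Ropp Rabs_pos_eq; [by [] | exact: (pos_INR n.+1)].
Qed.

Lemma int2R_den q : int2R (denq q) = INR `|denq q|%N.
Proof. by have := denq_gt0 q; case: (denq q). Qed.

Lemma rabs_rat2R q : Rabs (rat2R q) = INR `|numq q|%N / INR `|denq q|%N.
Proof.
rewrite /rat2R /Rdiv Rabs_mult Rabs_int2R int2R_den.
have h : 0 < INR `|denq q|%N by apply: lt_0_INR; apply/ltP; rewrite absz_gt0 denq_neq0.
by rewrite (Rabs_pos_eq (/ _)) //; apply: Rlt_le; apply: Rinv_0_lt_compat.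
Qed.

Lemma ln_le' x y : 0 < x -> x <= y -> ln x <= ln y.
Proof.
move=> xp [h|->]; last by apply: Rle_refl.
by apply: Rlt_le; apply: ln_increasing.
Qed.

Lemma ln0 : ln 0 = 0.
Proof. rewrite /ln; destruct (Rlt_dec 0 0) as [h|h]; [exfalso; exact: (Rlt_irrefl _ h) | reflexivity]. Qed.

Definition cst (Kn : nat) : R := 452 * ((ln (INR Kn) + ln 2) / ln 2 + 1).

Lemma ln2_pos : 0 < ln 2.
Proof. have := ln_lt_2; lra. Qed.

Lemma cst_pos Kn : (0 < Kn)%N -> 0 < cst Kn.
Proof.
move=> Kp. rewrite /cst.
have h1 : 0 <= ln (INR Kn).
  rewrite -ln_1; apply: ln_le'; first lra.
  exact: (le_INR 1 Kn (elimT leP Kp)).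
have := ln2_pos => h2.
have : 0 <= (ln (INR Kn) + ln 2) / ln 2 by apply: Rmult_le_pos; [lra | apply: Rlt_le; apply: Rinv_0_lt_compat; lra].
lra.
Qed.

Lemma ln_bound (r : R) (Kn N : nat) : (0 < Kn)%N -> (2 <= N)%N -> 0 <= r ->
  r <= INR (expn (Kn * (2 * N)) 452) -> ln r <= cst Kn * ln (INR N).
Proof.
move=> Kp N2 r0 hr.
have KR : 1 <= INR Kn by exact: (le_INR 1 Kn (elimT leP Kp)).
have NR : 2 <= INR N by have h := le_INR 2 N (elimT leP N2); simpl in h; lra.
have h2 := ln2_pos.
have lnN : ln 2 <= ln (INR N) by apply: ln_le'; lra.
have lnK : 0 <= ln (INR Kn) by rewrite -ln_1; apply: ln_le'; lra.
have cp := cst_pos Kp.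
case: r0 => [rp|<-]; last by rewrite ln0; apply: Rmult_le_pos; lra.
apply: Rle_trans (ln_le' rp hr) _.
have -> : INR (expn (Kn * (2 * N)) 452) = (INR Kn * (2 * INR N)) ^ 452.
  rewrite expn_pow pow_INR !mult_INR; f_equal; simpl; ring.
rewrite ln_pow; last by apply: Rmult_lt_0_compat; lra.
rewrite !ln_mult; try lra.
rewrite /cst.
set C0 := ln (INR Kn) + ln 2.
have : C0 <= C0 / ln 2 * ln (INR N).
  rewrite /Rdiv Rmult_assoc; rewrite -{1}(Rmult_1_r C0).
  apply: Rmult_le_compat_l; first by rewrite /C0; lra.
  apply: (Rmult_le_reg_l (ln 2)) => //. rewrite -Rmult_assoc Rinv_r; lra.
rewrite /C0 => h. simpl INR. nra.
Qed.

End M9.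
Import M9.

Module M10.

Lemma Ubound T a d N : 1 < T -> N <= T -> a <= T ^ 112 -> d <= T ^ 112 ->
  (a ^ 2 + N * d ^ 2) ^ 2 <= T ^ 452 /\ a <= T ^ 452.
Proof.
move=> T1 NT aT dT.
have Tp : 0 < T by apply: ltnW.
split; last by apply: leq_trans aT _; apply: leq_pexp2l.
have ha : a ^ 2 <= T ^ 225.
  apply: leq_trans (lexp 2 aT) _. rewrite -expnM. by apply: leq_pexp2l.
have hd : N * d ^ 2 <= T ^ 225.
  rewrite (_ : 225 = 1 + 112 * 2) // expnD expn1 expnM. apply: leq_mul => //. exact: lexp.
have hs : a ^ 2 + N * d ^ 2 <= T ^ 226.
  apply: leq_trans (leq_add ha hd) _. by rewrite addnn -mul2n (expnS T 225) leq_mul2r T1 orbT.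
apply: leq_trans (lexp 2 hs) _. by rewrite -expnM.
Qed.

Local Open Scope R_scope.

Lemma div_le_self x v : 0 <= x -> 1 <= v -> x / v <= x.
Proof.
move=> x0 v1. apply: (Rmult_le_reg_r v); first lra.
rewrite /Rdiv Rmult_assoc Rinv_l; [nra | lra].
Qed.

Section YNY.
Import GRing.Theory Num.Theory.
Local Open Scope ring_scope.
Lemma yny (y : rat) : y != 0 -> (y == - y) = false.
Proof.
move=> yn; apply/negbTE; apply/eqP => h.
have : y *+ 2 = 0 by rewrite mulr2n {1}h addNr.
by move/eqP; rewrite mulrn_eq0 /= (negbTE yn).
Qed.

Lemma pt2 N x y : ~ torsion N (Aff x y) -> y != 0 /\ exists X3 Y,
  mulpt N 2 (Aff x y) = Aff X3 Y /\ X3 = ((3%:R * x ^+ 2 - N%:R) / (2%:R * y)) ^+ 2 - x - x.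
Proof.
move=> htor.
have yn : y != 0.
  apply/negP => /eqP y0; apply: htor; exists 2%N; split => //.
  by rewrite /= eqxx y0 oppr0 eqxx.
split => //; rewrite /= eqxx (yny yn); by eexists; eexists.
Qed.
End YNY.




End M10.
Import M10.

Theorem lemma2p1 :
  ABC ->
  exists c : R, Rlt 0 c /\
    forall (N : nat) (P : pt), (0 < N)%N ->
      on_curve N P -> ~ torsion N P ->
      (len (mulpt N 2 P) <= 1)%N ->
      Rle (ln (Rabs (rat2R (xcoord P)))) (Rmult c (ln (INR N))) /\
      Rle (ln (Rabs (rat2R (xcoord (mulpt N 2 P))))) (Rmult c (ln (INR N))).
Proof.
move=> H; have [Kn [Kp HK]] := ABC_nat H.
exists (cst Kn); split; first exact: cst_pos.
move=> N [|x y] Np hon htor hlen.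
  by exfalso; apply: htor; exists 1%N.
have [yn [X3 [Y [hP hX3]]]] := pt2 htor.
rewrite hP in hlen *.
have [a [d [w [mm [[ap dp wp cad hmm] [heq [ha hd hE]]]]]]] := extract Np yn hon.
rewrite -hX3 in hE.
have d3p : (0 < `|denq X3|)%N by rewrite absz_gt0 denq_neq0.
have Hbad := bad_unique d3p cad heq hE hlen.
have : (1 == N) || (1 < N)%N by rewrite -leq_eqVlt.
case/orP => [/eqP N1|N2].
  subst N. exfalso. exact: (coreN1 ap dp wp cad hmm heq Hbad).
have [aT dT] := core_bound HK Kp Np ap dp wp cad hmm heq Hbad.
set T := (Kn * (2 * N))%N in aT dT.
have T1 : (1 < T)%N.
  rewrite /T; apply: (@leq_trans (2 * N)); first by rewrite (@leq_pmul2l 2 1 N).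
  by apply: leq_pmull.
have NT : (N <= T)%N by rewrite /T; apply: (@leq_trans (2 * N)); [exact: leq_pmull | exact: leq_pmull].
have [hU haT] := Ubound T1 NT aT dT.
split; apply: ln_bound => //; try exact: Rabs_pos.
- rewrite /= rabs_rat2R ha hd.
  apply: Rle_trans (div_le_self _ _) _; [exact: pos_INR | exact: (le_INR 1 d (elimT leP dp)) |].
  by apply: le_INR; apply/leP.
- rewrite /= rabs_rat2R.
  set n3 := `|numq X3|%N in hE *; set d3 := `|denq X3|%N in hE d3p *.
  set U := ((a ^ 2 + N * d ^ 2) ^ 2)%N in hE hU *.
  set V := (4 * d * (a * w))%N in hE.
  have Vp : (0 < V)%N by rewrite /V !muln_gt0 dp ap wp.
  have -> : (INR n3 / INR d3 = INR U / INR V)%R.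
    have e := congr1 INR hE; rewrite (mult_INR n3 V) (mult_INR U d3) in e.
    have hd3 : (0 < INR d3)%R by apply: lt_0_INR; apply/ltP.
    have hV : (0 < INR V)%R by apply: lt_0_INR; apply/ltP.
    field_simplify_eq; [nra | lra].
  apply: Rle_trans (div_le_self _ _) _; [exact: pos_INR | exact: (le_INR 1 V (elimT leP Vp)) |].
  by apply: le_INR; apply/leP.
Qed.
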